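(* Let $|\psi\rangle\in\mathcal{H}$ be a normalized pure state that is UDA relative to a non-trivial neighborhood structure $\mathcal{N}=\{\mathcal{N}_k\}$, and write $\rho=|\psi\rangle\langle\psi|$. Consider the optimization problem: maximize $-\mathrm{tr}(H\rho)$ over Hermitian operators $H$ on $\mathcal{H}$ subject to (i) $H+\rho\ge0$ and (ii) $H$ is quasi-local relative to $\mathcal{N}$, i.e. $H=\sum_k H_{\mathcal{N}_k}\otimes I_{\overline{\mathcal{N}}_k}$ for some operators $H_{\mathcal{N}_k}$ on $\bigotimes_{a\in\mathcal{N}_k}\mathcal{H}_a$. Assume this problem attains its optimal value, i.e. some feasible $H$ achieves the supremum. Then there exists a Hamiltonian that is quasi-local relative to $\mathcal{N}$ and has $|\psi\rangle$ as its unique ground state.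
   Context: $\mathcal{H}=\bigotimes_{a=1}^N\mathcal{H}_a$ is finite-dimensional; $\mathcal{D}(\mathcal{H})$ is the set of density operators. A neighborhood is $\mathcal{N}_k\subsetneq\{1,\dots,N\}$ with complement $\overline{\mathcal{N}}_k$; a neighborhood structure is a finite collection of neighborhoods, non-trivial if every index lies in some neighborhood and each neighborhood intersects another. $\rho_{\mathcal{N}_k}=\mathrm{tr}_{\overline{\mathcal{N}}_k}\rho$. A state $\rho$ is UDA relative to $\mathcal{N}$ if no $\sigma\in\mathcal{D}(\mathcal{H})$, $\sigma\neq\rho$, has $\sigma_{\mathcal{N}_k}=\rho_{\mathcal{N}_k}$ for all $k$. A Hamiltonian is quasi-local relative to $\mathcal{N}$ if it is Hermitian of the form $\sum_kH_{\mathcal{N}_k}\otimes I_{\overline{\mathcal{N}}_k}$; $|\psi\rangle$ is its unique ground state if the eigenspace of the smallest eigenvalue is $\mathrm{span}\{|\psi\rangle\}$. *)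

(* Defs.v *)
(* Finite-dimensional quantum systems over C := R[i],
   R an arbitrary realType (all realTypes are isomorphic to the reals). *)
From HB Require Import structures.
From mathcomp Require Import all_boot all_order all_algebra.
From mathcomp Require Import complex.
From mathcomp Require Import reals.
Set Implicit Arguments. Unset Strict Implicit. Unset Printing Implicit Defensive.
Import Order.TTheory GRing.Theory Num.Theory.
Local Open Scope ring_scope.

Section Quantum.
Variable R : realType.
Local Notation C := (R[i]).
Variables (N : nat) (d : 'I_N -> nat).

(* computational basis of H = ⊗_a H_a : configurations x with x a : 'I_(d a) *)
Definition basis := {dffun forall a : 'I_N, 'I_(d a)}.

(* operators on H (matrix entries <x|A|y>) and vectors of H *)
Definition op := basis -> basis -> C.
Definition vec := basis -> C.

Definition opadd (A B : op) : op := fun x y => A x y + B x y.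
Definition opmul (A B : op) : op := fun x y => \sum_(z : basis) A x z * B z y.
Definition optr (A : op) : C := \sum_(x : basis) A x x.
Definition opapp (A : op) (v : vec) : vec := fun x => \sum_(y : basis) A x y * v y.
Definition hermitian (A : op) := forall x y, A y x = (A x y)^*.
Definition psd (A : op) :=
  hermitian A /\ forall v : vec, 0 <= \sum_(x : basis) \sum_(y : basis) (v x)^* * A x y * v y.
Definition density (s : op) := psd s /\ optr s = 1.
Definition normalized (psi : vec) := \sum_(x : basis) (psi x)^* * psi x = 1.
Definition proj (psi : vec) : op := fun x y => psi x * (psi y)^*.

Definition glue (S : {set 'I_N}) (x w : basis) : basis :=
  [ffun a => if a \in S then x a else w a].
Definition agree_on (S : {set 'I_N}) (x y : basis) := [forall a in S, x a == y a].

(* reduced operator rho_S = tr_{S^c} rho, viewed as the kernel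
   (x_S, y_S) |-> sum_{z on S^c} rho (x_S z) (y_S z); it depends only on the S-parts *)
Definition ptrace (S : {set 'I_N}) (rho : op) : op :=
  fun x y => \sum_(w : basis | agree_on S w x) rho w (glue S y w).

(* A = h ⊗ I_{S^c} for some operator h on ⊗_{a in S} H_a *)
Definition local_on (S : {set 'I_N}) (A : op) :=
  exists h : op,
    (forall x x' y y', agree_on S x x' -> agree_on S y y' -> h x y = h x' y') /\
    (forall x y, A x y = if agree_on (~: S) x y then h x y else 0).

Definition neighborhood_structure (K : nat) (nb : 'I_K -> {set 'I_N}) :=
  forall k, nb k \proper [set: 'I_N].
Definition nontrivial (K : nat) (nb : 'I_K -> {set 'I_N}) :=
  (forall a : 'I_N, exists k, a \in nb k) /\
  (forall k, exists k', k' != k /\ nb k :&: nb k' != set0).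

Definition UDA (K : nat) (nb : 'I_K -> {set 'I_N}) (rho : op) :=
  forall sigma : op, density sigma ->
    (forall k, ptrace (nb k) sigma = ptrace (nb k) rho) -> sigma = rho.

Definition quasi_local (K : nat) (nb : 'I_K -> {set 'I_N}) (H : op) :=
  hermitian H /\
  exists hs : 'I_K -> op, (forall k, local_on (nb k) (hs k)) /\
    forall x y, H x y = \sum_(k < K) hs k x y.

Definition eigenvalue (H : op) (mu : C) :=
  exists v : vec, (exists x, v x != 0) /\ opapp H v = (fun x => mu * v x).

Definition unique_ground_state (H : op) (psi : vec) :=
  exists lam : C, eigenvalue H lam /\ (forall mu, eigenvalue H mu -> lam <= mu) /\
    forall v : vec, opapp H v = (fun x => lam * v x) <-> exists c : C, v = (fun x => c * psi x).

Definition feasible (K : nat) (nb : 'I_K -> {set 'I_N}) (rho H : op) :=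
  hermitian H /\ psd (opadd H rho) /\ quasi_local nb H.

End Quantum.

(* Main.v *)
Require Import Defs.
From HB Require Import structures.
From mathcomp Require Import all_boot all_order all_algebra.
From mathcomp Require Import complex.
From mathcomp Require Import reals.
From mathcomp Require Import ring lra.
From Stdlib Require Import FunctionalExtensionality.
Import Order.TTheory GRing.Theory Num.Theory.
Local Open Scope ring_scope.
Set Implicit Arguments. Unset Strict Implicit. Unset Printing Implicit Defensive.
Local Notation hermitian := Defs.hermitian.
Section Basic.
Variable R : realType.
Local Notation C := (R[i]).
Local Notation "x %:C" := (x%:C)%C (at level 1, format "x %:C").
Variables (N : nat) (d : 'I_N -> nat).
Local Notation Bs := (basis d).
Local Notation op := (op R d).
Local Notation vec := (vec R d).

Lemma conjR (r : R) : (r%:C)^* = r%:C :> C.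
Proof. exact: conjc_real. Qed.

Lemma cK (x : C) : x^*^* = x.
Proof. exact: conjCK. Qed.

Lemma cM (x y : C) : (x * y)^* = x^* * y^*.
Proof. exact: rmorphM. Qed.

Lemma cD (x y : C) : (x + y)^* = x^* + y^*.
Proof. exact: rmorphD. Qed.

Lemma cN (x : C) : (- x)^* = - x^*.
Proof. exact: rmorphN. Qed.

Lemma sum_delta (F : Bs -> C) p : \sum_x (x == p)%:R * F x = F p.
Proof.
rewrite (bigD1 p) //= eqxx mul1r big1 ?addr0 // => x /negbTE ->; by rewrite mul0r.
Qed.

Lemma sum_delta' (F : Bs -> C) p : \sum_x F x * (x == p)%:R = F p.
Proof. rewrite -[RHS]sum_delta; apply: eq_bigr => x _; by rewrite mulrC. Qed.

Lemma agree_refl S (x : Bs) : agree_on S x x.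
Proof. by apply/forall_inP => a _. Qed.

Lemma agree_sym S (x y : Bs) : agree_on S x y = agree_on S y x.
Proof.
by apply/forall_inP/forall_inP => h a aS; rewrite eq_sym h.
Qed.

Lemma agree_trans S (x y z : Bs) : agree_on S x y -> agree_on S y z -> agree_on S x z.
Proof.
move=> /forall_inP h1 /forall_inP h2; apply/forall_inP => a aS.
by rewrite (eqP (h1 a aS)) h2.
Qed.

Lemma agree_glue S (q y p : Bs) :
  (agree_on S q y && agree_on (~: S) q p) = (q == glue S y p).
Proof.
apply/idP/eqP.
- move=> /andP [/forall_inP h1 /forall_inP h2]; apply/ffunP => a; rewrite ffunE.
  case: ifP => aS; first by apply/eqP; apply: h1.
  by apply/eqP; apply: h2; rewrite in_setC aS.
- move=> ->; apply/andP; split; apply/forall_inP => a; rewrite ffunE.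
  + by move=> ->.
  + by rewrite in_setC => /negbTE ->.
Qed.

Lemma agree_all S (p q : Bs) : (agree_on S p q && agree_on (~: S) p q) = (p == q).
Proof.
apply/idP/eqP.
- move=> /andP [/forall_inP h1 /forall_inP h2]; apply/ffunP => a.
  case aS: (a \in S); first by apply/eqP; apply: h1.
  by apply/eqP; apply: h2; rewrite in_setC aS.
- by move=> ->; rewrite !agree_refl.
Qed.

Definition qf (v : vec) (A : op) : C := \sum_x \sum_y (v x)^* * A x y * v y.
Definition tp (Y A : op) : C := \sum_x \sum_y Y x y * A y x.
Definition sc (r : R) (A : op) : op := fun x y => r%:C * A x y.
Definition opI : op := fun x y => (x == y)%:R.
Definition op0 : op := fun x y => 0.

Lemma herm_qf v (A : op) : hermitian A -> (qf v A)^* = qf v A.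
Proof.
move=> hA; rewrite /qf rmorph_sum /= exchange_big /=; apply: eq_bigr => x _.
rewrite rmorph_sum; apply: eq_bigr => y _.
by rewrite !rmorphM /= conjCK (hA x y) mulrC [v x * _]mulrC mulrA.
Qed.

Lemma herm_qf_real v (A : op) : hermitian A -> qf v A \is Num.real.
Proof. by move=> hA; rewrite CrealE herm_qf. Qed.

Lemma qfD v (A B : op) : qf v (fun x y : Bs => A x y + B x y) = qf v A + qf v B.
Proof.
rewrite /qf -big_split; apply: eq_bigr => x _; rewrite -big_split; apply: eq_bigr => y _.
by rewrite mulrDr mulrDl.
Qed.

Lemma qfZ v c (A : op) : qf v (fun x y : Bs => c * A x y) = c * qf v A.
Proof.
rewrite /qf mulr_sumr; apply: eq_bigr => x _; rewrite mulr_sumr; apply: eq_bigr => y _.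
by rewrite mulrCA !mulrA.
Qed.

Lemma qf_ext v (A B : op) : (forall x y, A x y = B x y) -> qf v A = qf v B.
Proof. by move=> h; rewrite /qf; apply: eq_bigr => x _; apply: eq_bigr => y _; rewrite h. Qed.

Lemma psd_ext (A B : op) : (forall x y, A x y = B x y) -> psd A -> psd B.
Proof.
move=> h [hA pA]; split; first by move=> x y; rewrite -!h hA.
by move=> v; change (0 <= qf v B); rewrite -(qf_ext v h); apply: pA.
Qed.

Lemma psdD (A B : op) : psd A -> psd B -> psd (fun x y : Bs => A x y + B x y).
Proof.
move=> [hA pA] [hB pB]; split; first by move=> x y; rewrite hA hB rmorphD.
by move=> v; change (0 <= qf v (fun x y : Bs => A x y + B x y)); rewrite qfD addr_ge0 //; [apply: pA | apply: pB].
Qed.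

Lemma psdZ (r : R) (A : op) : 0 <= r -> psd A -> psd (sc r A).
Proof.
move=> r0 [hA pA]; split; first by move=> x y; rewrite /sc hA rmorphM /= conjR.
by move=> v; change (0 <= qf v (sc r A)); rewrite /sc qfZ mulr_ge0 ?ler0c //; apply: pA.
Qed.

Lemma hermD (A B : op) : hermitian A -> hermitian B -> hermitian (fun x y : Bs => A x y + B x y).
Proof. by move=> hA hB x y; rewrite hA hB rmorphD. Qed.

Lemma hermZ (r : R) (A : op) : hermitian A -> hermitian (sc r A).
Proof. by move=> hA x y; rewrite /sc hA rmorphM /= conjR. Qed.


Local Notation iC := ('i%C : C).

Lemma conj_i : iC^* = - iC.
Proof. by apply/eqP; rewrite eq_complex /= oppr0 !eqxx. Qed.

Lemma i2 : iC * iC = -1.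
Proof. by rewrite -expr2 sqr_i. Qed.

Lemma Re_conj (z : C) : complex.Re (z^*) = complex.Re z.
Proof. by case: z. Qed.

Lemma Im_conj (z : C) : complex.Im (z^*) = - complex.Im z.
Proof. by case: z. Qed.

Definition T := (Bs * Bs * bool)%type.

Definition delta2 (x y : Bs) : op := fun p q => (x == p)%:R * (y == q)%:R.

Definition gen (i : T) : op := fun p q =>
  let: (x, y, b) := i in
  if b then iC * delta2 x y p q - iC * delta2 y x p q
  else delta2 x y p q + delta2 y x p q.

Definition coef (X : op) (i : T) : R :=
  let: (x, y, b) := i in
  if b then complex.Im (X x y) / 2 else complex.Re (X x y) / 2.

Lemma sum2_delta (F : Bs -> Bs -> C) p q :
  \sum_x \sum_y F x y * delta2 x y p q = F p q.
Proof.
rewrite (eq_bigr (fun x => F x q * (x == p)%:R)) ?sum_delta' // => x _.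
rewrite -(sum_delta' (fun y => F x y * (x == p)%:R) q); apply: eq_bigr => y _.
rewrite /delta2; ring.
Qed.

Lemma sumT (F : T -> C) :
  \sum_(i : T) F i = \sum_x \sum_y (F (x, y, true) + F (x, y, false)).
Proof.
transitivity (\sum_(xy : Bs * Bs) \sum_(b : bool) F (xy, b)).
  by rewrite (pair_bigA _ (fun xy b => F (xy, b))); apply: eq_bigr => -[xy b].
transitivity (\sum_x \sum_y \sum_(b : bool) F ((x, y), b)); last first.
  by apply: eq_bigr => x _; apply: eq_bigr => y _; rewrite big_bool.
by rewrite (pair_bigA _ (fun x y => \sum_(b : bool) F ((x, y), b))); apply: eq_bigr => -[x y].
Qed.

Lemma decomp (X : op) p q : hermitian X ->
  \sum_(i : T) (coef X i)%:C * gen i p q = X p q.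
Proof.
move=> hX; rewrite sumT /=.
rewrite (eq_bigr (fun x => \sum_y (((complex.Re (X x y) / 2)%:C + iC * (complex.Im (X x y) / 2)%:C) * delta2 x y p q
    + ((complex.Re (X x y) / 2)%:C - iC * (complex.Im (X x y) / 2)%:C) * delta2 y x p q))); last first.
  by move=> x _; apply: eq_bigr => y _; ring.
rewrite (eq_bigr (fun x => \sum_y (((complex.Re (X x y) / 2)%:C + iC * (complex.Im (X x y) / 2)%:C) * delta2 x y p q)
   + \sum_y (((complex.Re (X x y) / 2)%:C - iC * (complex.Im (X x y) / 2)%:C) * delta2 y x p q))); last first.
  by move=> x _; rewrite big_split.
rewrite big_split /= sum2_delta exchange_big /= sum2_delta.
rewrite (hX p q) Re_conj Im_conj.
set a := complex.Re _; set b := complex.Im _.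
have -> : ((a / 2)%:C + iC * (b / 2)%:C + ((a / 2)%:C - iC * (- b / 2)%:C)) = a%:C + iC * b%:C.
  rewrite mulNr !rmorphM /= !fmorphV /= rmorphN /= rmorph_nat.
  by field.
by rewrite /a /b -complexE.
Qed.

Lemma sum2_delta_r (F : Bs -> Bs -> C) x y :
  \sum_p \sum_q F p q * delta2 x y p q = F x y.
Proof.
rewrite -[RHS](sum2_delta (fun p q => F p q)); apply: eq_bigr => p _; apply: eq_bigr => q _.
by rewrite /delta2 ![_ == x]eq_sym ![_ == y]eq_sym.
Qed.

Lemma qf_delta2 v x y : qf v (delta2 x y) = (v x)^* * v y.
Proof.
rewrite -(sum2_delta_r (fun p q => (v p)^* * v q) x y) /qf.
apply: eq_bigr => p _; apply: eq_bigr => q _; ring.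
Qed.

Lemma qf_I v : qf v opI = \sum_x (v x)^* * v x.
Proof.
rewrite /qf; apply: eq_bigr => x _.
rewrite -(sum_delta' (fun y => (v x)^* * v y) x); apply: eq_bigr => y _.
by rewrite /opI eq_sym; ring.
Qed.

Lemma expand_f (a a' b b' e : C) : e * e = 1 ->
  (a + e * b) * (a' + e * b') = a' * a + b' * b + e * (a' * b + b' * a).
Proof.
move=> he; transitivity (a' * a + b' * b + e * (a' * b + b' * a) + (e * e - 1) * (b * b')).
  by ring.
by rewrite he subrr mul0r addr0.
Qed.

Lemma expand_t (a a' b b' e : C) : e * e = 1 ->
  (a + e * iC * b) * (a' - e * iC * b') = a' * a + b' * b + e * (iC * (a' * b) - iC * (b' * a)).
Proof.
move=> he; transitivity (a' * a + b' * b + e * (iC * (a' * b) - iC * (b' * a))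
   + (- (e * e) * (iC * iC) - 1) * (b * b')).
  by ring.
by rewrite he i2 mulN1r opprK subrr mul0r addr0.
Qed.

Lemma ineq_f (a b : C) (e : R) : e * e = 1 ->
  0 <= a^* * a + b^* * b + e%:C * (a^* * b + b^* * a).
Proof.
move=> he; have := mul_conjC_ge0 (a + e%:C * b).
rewrite rmorphD rmorphM /= conjR expand_f //.
by rewrite -rmorphM he.
Qed.

Lemma ineq_t (a b : C) (e : R) : e * e = 1 ->
  0 <= a^* * a + b^* * b + e%:C * (iC * (a^* * b) - iC * (b^* * a)).
Proof.
move=> he; have := mul_conjC_ge0 (a + e%:C * iC * b).
rewrite rmorphD !rmorphM /= conjR conj_i mulrN mulNr expand_t //.
by rewrite -rmorphM he.
Qed.

Lemma sq_le_sum (v : vec) x : (v x)^* * v x <= \sum_z (v z)^* * v z.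
Proof.
rewrite (bigD1 x) //= lerDl sumr_ge0 // => z _.
by rewrite mulrC mul_conjC_ge0.
Qed.

Lemma herm_I : hermitian opI.
Proof. by move=> x y; rewrite /opI rmorph_nat eq_sym. Qed.

Lemma conj_delta2 x y p q : (delta2 x y p q)^* = delta2 x y p q.
Proof. by rewrite /delta2 rmorphM /= !rmorph_nat. Qed.

Lemma delta2_swap x y p q : delta2 x y q p = delta2 y x p q.
Proof. by rewrite /delta2 mulrC. Qed.

Lemma herm_gen i : hermitian (gen i).
Proof.
case: i => [[x y] b] p q /=; case: b.
- by rewrite rmorphB !rmorphM /= !rmorph_nat conj_i /delta2; ring.
- by rewrite rmorphD !rmorphM /= !rmorph_nat /delta2; ring.
Qed.

Lemma psd_bound (i : T) (e : R) : e * e = 1 ->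
  psd (fun p q : Bs => 2%:R * opI p q + e%:C * gen i p q).
Proof.
move=> he; split.
  move=> p q; rewrite rmorphD !rmorphM /= conjR rmorph_nat.
  by rewrite -herm_I -herm_gen.
move=> v; change (0 <= qf v (fun p q : Bs => 2%:R * opI p q + e%:C * gen i p q)).
rewrite qfD qfZ qfZ qf_I.
set s := \sum_x _.
case: i => [[x y] b]; set Q := qf v _.
have hx := sq_le_sum v x; have hy := sq_le_sum v y.
have key : 0 <= (v x)^* * v x + (v y)^* * v y + e%:C * Q.
  rewrite /Q {Q} /gen; case: b.
  - rewrite (qf_ext _ (B := fun p q => iC * delta2 x y p q + (- iC) * delta2 y x p q)); last first.
      by move=> p q; rewrite mulNr.
    rewrite qfD !qfZ !qf_delta2 mulNr; exact: ineq_t.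
  - rewrite qfD !qf_delta2; exact: ineq_f.
have -> : 2%:R * s + e%:C * Q = (s - (v x)^* * v x) + (s - (v y)^* * v y) + ((v x)^* * v x + (v y)^* * v y + e%:C * Q).
  by ring.
by apply: addr_ge0 => //; apply: addr_ge0; rewrite subr_ge0.
Qed.

Section Krein.
Variable Lq : op -> Prop.
Variable M : op.
Variable f : op -> R.
Hypothesis LqD : forall L L', Lq L -> Lq L' -> Lq (fun p q : Bs => L p q + L' p q).
Hypothesis LqZ : forall r L, Lq L -> Lq (sc r L).
Hypothesis LqI : Lq opI.
Hypothesis fD : forall L L', f (fun p q : Bs => L p q + L' p q) = f L + f L'.
Hypothesis fZ : forall r L, f (sc r L) = r * f L.
Hypothesis base : forall L s, Lq L -> psd (fun p q : Bs => L p q + s%:C * M p q) -> 0 <= f L.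

Definition comb (L : op) (s : R) (c : T -> R) : op :=
  fun p q => L p q + s%:C * M p q + \sum_i (c i)%:C * gen i p q.
Definition val (L : op) (c : T -> R) (a : T -> R) : R := f L + \sum_i c i * a i.
Definition supp (S : {set T}) (c : T -> R) := forall i, i \notin S -> c i = 0.
Definition Pos (S : {set T}) (a : T -> R) :=
  forall L s c, Lq L -> supp S c -> psd (comb L s c) -> 0 <= val L c a.

Lemma combD L1 s1 c1 L2 s2 c2 p q :
  comb (fun p q => L1 p q + L2 p q) (s1 + s2) (fun i => c1 i + c2 i) p q
  = comb L1 s1 c1 p q + comb L2 s2 c2 p q.
Proof.
rewrite /comb rmorphD /=.
rewrite (eq_bigr (fun i => (c1 i)%:C * gen i p q + (c2 i)%:C * gen i p q)); last first.
  by move=> i _; rewrite rmorphD mulrDl.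
rewrite big_split /=; ring.
Qed.

Lemma valD L1 c1 L2 c2 a :
  val (fun p q => L1 p q + L2 p q) (fun i => c1 i + c2 i) a = val L1 c1 a + val L2 c2 a.
Proof.
rewrite /val fD (eq_bigr (fun i => c1 i * a i + c2 i * a i)); last by move=> i _; rewrite mulrDl.
rewrite big_split /=; ring.
Qed.

Lemma combZ r L s c p q :
  comb (sc r L) (r * s) (fun i => r * c i) p q = r%:C * comb L s c p q.
Proof.
rewrite /comb /sc !mulrDr mulr_sumr rmorphM /=.
rewrite (eq_bigr (fun i => r%:C * ((c i)%:C * gen i p q))); last first.
  by move=> i _; rewrite rmorphM /= mulrA.
ring.
Qed.

Lemma valZ r L c a : val (sc r L) (fun i => r * c i) a = r * val L c a.
Proof.
rewrite /val fZ mulrDr mulr_sumr; congr (_ + _); apply: eq_bigr => i _; by rewrite mulrA.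
Qed.

Lemma Pos0 a : Pos set0 a.
Proof.
move=> L s c hL hc hpsd.
have c0 : forall i, c i = 0 by move=> i; apply: hc; rewrite in_set0.
have -> : val L c a = f L by rewrite /val big1 ?addr0 // => i _; rewrite c0 mul0r.
apply: (base (s := s)) => //; apply: psd_ext hpsd => p q.
by rewrite /comb big1 ?addr0 // => i _; rewrite c0 mul0r.
Qed.

Lemma ext_step (S : {set T}) (a : T -> R) (x : T) : x \notin S -> Pos S a -> exists a', Pos (x |: S) a'.
Proof.
move=> xS hP.
pose A : classical_sets.set R := fun e => exists L s c,
  [/\ Lq L, supp S c, psd (fun p q : Bs => comb L s c p q + gen x p q) & e = - val L c a].
have ub : forall L s c, Lq L -> supp S c -> psd (fun p q : Bs => comb L s c p q - gen x p q) ->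
    classical_sets.ubound A (val L c a).
  move=> L s c hL hc hpsd e [L1 [s1 [c1 [hL1 hc1 hpsd1 ->]]]].
  have := hP (fun p q => L1 p q + L p q) (s1 + s) (fun i => c1 i + c i) (LqD hL1 hL).
  rewrite valD => h; rewrite -subr_ge0 opprK addrC; apply: h.
    by move=> i iS; rewrite hc ?hc1 ?addr0.
  apply: psd_ext (psdD hpsd1 hpsd) => p q; rewrite combD; ring.
have zsupp : supp S (fun _ => 0) by [].
have c0 : forall (L : op) s p q, comb L s (fun _ => 0) p q = L p q + s%:C * M p q.
  by move=> L s p q; rewrite /comb big1 ?addr0 // => i _; rewrite rmorph0 mul0r.
have LI := LqZ 2 LqI.
have Ane : classical_sets.nonempty A.
  exists (- val (sc 2 opI) (fun _ => 0) a), (sc 2 opI), 0, (fun _ => 0); split => //.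
  apply: psd_ext (psd_bound x (mulr1 1)) => p q.
  by rewrite c0 rmorph0 mul0r addr0 mul1r /sc rmorph_nat.
have Aub : classical_sets.has_ubound A.
  exists (val (sc 2 opI) (fun _ => 0) a); apply: (ub _ 0) => //.
  have h : (-1 : R) * -1 = 1 by rewrite mulN1r opprK.
  apply: psd_ext (psd_bound x h) => p q.
  by rewrite c0 rmorph0 mul0r addr0 rmorphN rmorph1 mulN1r /sc rmorph_nat.
have Asup : classical_sets.has_sup A by split.
exists (fun i => if i == x then sup A else a i).
move=> L s c hL hc hpsd.
pose t := c x; pose c0' := fun i => if i == x then 0 else c i.
have hc0 : supp S c0'.
  move=> i iS; rewrite /c0'; case: eqP => // /eqP ix; apply: hc.
  by rewrite in_setU1 negb_or ix.
have ecomb : forall p q, comb L s c p q = comb L s c0' p q + t%:C * gen x p q.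
  move=> p q; rewrite /comb (bigD1 x) //= [in RHS](bigD1 x) //= /c0' eqxx rmorph0 mul0r add0r.
  rewrite [in RHS](eq_bigr (fun i => (c i)%:C * gen i p q)); last by move=> i /negbTE ->.
  rewrite /t; ring.
have eval : val L c (fun i => if i == x then sup A else a i) = val L c0' a + t * sup A.
  rewrite /val (bigD1 x) //= [in RHS](bigD1 x) //= /c0' !eqxx mul0r add0r.
  rewrite (eq_bigr (fun i => c i * a i)); last by move=> i /negbTE ->.
  rewrite [in RHS](eq_bigr (fun i => c i * a i)); last by move=> i /negbTE ->.
  rewrite /t; ring.
rewrite eval.
case: (ltrgtP t 0) => ht.
-
  pose r := (- t)^-1.
  have r0 : 0 <= r by rewrite /r invr_ge0 oppr_ge0 ltW.
  have h1 : r * (- t) = 1 by rewrite /r mulVf // oppr_eq0 lt_eqF.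
  have rt : r * t = -1 by rewrite -h1 mulrN opprK.
  have hub := ub (sc r L) (r * s) (fun i => r * c0' i) (LqZ r hL).
  have hs : sup A <= r * val L c0' a.
    rewrite -valZ; apply: ge_sup => //; apply: hub.
      by move=> i iS; rewrite hc0 ?mulr0.
    apply: psd_ext (psdZ r0 hpsd) => p q.
    rewrite combZ /sc ecomb mulrDr mulrA -rmorphM rt rmorphN rmorph1 mulN1r //.
  have : t * (r * val L c0' a) <= t * sup A by rewrite ler_wnM2l // ltW.
  rewrite mulrA [t * r]mulrC rt mulN1r => h.
  by rewrite -(subrr (val L c0' a)) lerD2l.
-
  pose r := t^-1.
  have r0 : 0 <= r by rewrite /r invr_ge0 ltW.
  have rt : r * t = 1 by rewrite /r mulVf // gt_eqF.
  have hA : A (- val (sc r L) (fun i => r * c0' i) a).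
    exists (sc r L), (r * s), (fun i => r * c0' i); split => //.
      by apply: LqZ.
      by move=> i iS; rewrite hc0 ?mulr0.
    apply: psd_ext (psdZ r0 hpsd) => p q.
    by rewrite combZ /sc ecomb mulrDr mulrA -rmorphM rt rmorph1 mul1r.
  have hs := sup_upper_bound Asup hA.
  rewrite valZ in hs.
  have : t * (- (r * val L c0' a)) <= t * sup A by rewrite ler_wpM2l // ltW.
  rewrite mulrN mulrA [t * r]mulrC rt mul1r => h.
  by rewrite -(subrr (val L c0' a)) lerD2l.
-
  rewrite ht mul0r addr0; apply: (hP L s c0' hL hc0).
  by apply: psd_ext hpsd => p q; rewrite ecomb ht rmorph0 mul0r addr0.
Qed.

Lemma ext_all : exists a, Pos setT a.
Proof.
suff : forall n (S : {set T}), (#|S| <= n)%N -> exists a, Pos S a.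
  by move=> /(_ #|[set: T]| setT (leqnn _)).
elim=> [|n IH] S hS.
  by exists (fun _ => 0); move: hS; rewrite leqn0 cards_eq0 => /eqP ->; apply: Pos0.
case: (set_0Vmem S) => [->|[x xS]]; first by exists (fun _ => 0); apply: Pos0.
have hS' : (#|(S :\ x)%SET| <= n)%N.
  by rewrite -ltnS (leq_trans _ hS) // [X in (_ < X)%N](cardsD1 x S) xS.
have [a ha] := IH _ hS'.
have := @ext_step (S :\ x)%SET a x.
rewrite setD11 setD1K // => h; exact: h.
Qed.


Lemma ReD (x y : C) : complex.Re (x + y) = complex.Re x + complex.Re y.
Proof. by case: x; case: y. Qed.

Lemma ReSum (I : finType) (F : I -> C) : complex.Re (\sum_i F i) = \sum_i complex.Re (F i).
Proof. by apply: (big_morph (@complex.Re R)) => //; exact: ReD. Qed.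

Lemma ReZ (r : R) (x : C) : complex.Re (r%:C * x) = r * complex.Re x.
Proof. by case: x => u v /=; rewrite mul0r subr0. Qed.

Lemma addJ (z : C) : z + z^* = (2 * complex.Re z)%:C.
Proof. by rewrite rmorphM /= rmorph_nat; exact: addcJ. Qed.

Lemma sumT_R (F : T -> R) :
  \sum_(i : T) F i = \sum_x \sum_y (F (x, y, true) + F (x, y, false)).
Proof.
transitivity (\sum_(xy : Bs * Bs) \sum_(b : bool) F (xy, b)).
  by rewrite (pair_bigA _ (fun xy b => F (xy, b))); apply: eq_bigr => -[xy b].
transitivity (\sum_x \sum_y \sum_(b : bool) F ((x, y), b)); last first.
  by apply: eq_bigr => x _; apply: eq_bigr => y _; rewrite big_bool.
by rewrite (pair_bigA _ (fun x y => \sum_(b : bool) F ((x, y), b))); apply: eq_bigr => -[x y].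
Qed.

Definition Phi (a : T -> R) (X : op) : R := \sum_i coef X i * a i.

Definition Yp (a : T -> R) : op := fun p q =>
  Complex (a (q, p, false) / 4) (- a (q, p, true) / 4).
Arguments Yp : simpl never.
Definition Ymat (a : T -> R) : op := fun p q => Yp a p q + (Yp a q p)^*.

Lemma herm_Y a : hermitian (Ymat a).
Proof. move=> p q; rewrite /Ymat rmorphD /= addrC; congr (_ + _); exact: (esym (conjCK _)). Qed.

Lemma tp_Y a (X : op) : hermitian X -> tp (Ymat a) X = (Phi a X)%:C.
Proof.
move=> hX.
have h1 : tp (Ymat a) X = tp (Yp a) X + (tp (Yp a) X)^*.
  have -> : (tp (Yp a) X)^* = \sum_p \sum_q (Yp a q p)^* * X q p.
    rewrite /tp rmorph_sum /=; under eq_bigr do rewrite rmorph_sum /=.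
    rewrite exchange_big /=; apply: eq_bigr => p _; apply: eq_bigr => q _.
    by rewrite rmorphM /= (hX q p) cK.
  rewrite /tp -big_split /=; apply: eq_bigr => p _.
  rewrite -big_split /=; apply: eq_bigr => q _.
  by rewrite /Ymat mulrDl.
rewrite h1 addJ; congr (_%:C).
rewrite /tp ReSum /Phi sumT_R exchange_big /= mulr_sumr; apply: eq_bigr => x _.
rewrite ReSum mulr_sumr; apply: eq_bigr => y _.
rewrite /coef /Yp; case: (X _ _) => u v /=.
by field.
Qed.

Lemma proj_psd (v : vec) : psd (proj v).
Proof.
split; first by move=> x y; rewrite /proj rmorphM /= conjCK mulrC.
move=> w; change (0 <= qf w (proj v)).
have -> : qf w (proj v) = (\sum_x (w x)^* * v x) * (\sum_x (w x)^* * v x)^*.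
  rewrite /qf mulr_suml; apply: eq_bigr => x _.
  rewrite rmorph_sum mulr_sumr; apply: eq_bigr => y _.
  by rewrite /proj rmorphM /= conjCK; ring.
exact: mul_conjC_ge0.
Qed.

Lemma qf_tp (v : vec) (Y : op) : qf v Y = tp Y (proj v).
Proof.
by rewrite /qf /tp; apply: eq_bigr => x _; apply: eq_bigr => y _; rewrite /proj; ring.
Qed.

Lemma psd0 : psd op0.
Proof.
split; first by move=> x y; rewrite /op0 rmorph0.
move=> v; change (0 <= qf v op0); rewrite /qf big1 // => x _; rewrite big1 // => y _.
by rewrite /op0 mulr0 mul0r.
Qed.

Section Final.
Variable a : T -> R.
Hypothesis ha : Pos setT a.
Hypothesis f0 : f op0 = 0.
Hypothesis Lq0 : Lq op0.
Hypothesis LqN : forall L, Lq L -> Lq (sc (-1) L).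
Hypothesis fN : forall L, f (sc (-1) L) = - f L.

Lemma suppT c : supp setT c.
Proof. by move=> i; rewrite in_setT. Qed.

Lemma sumNc (c : T -> R) p q :
  \sum_i (- c i)%:C * gen i p q = - \sum_i (c i)%:C * gen i p q.
Proof.
rewrite -sumrN; apply: eq_bigr => i _; by rewrite rmorphN mulNr.
Qed.

Lemma sumNa (c : T -> R) : \sum_i (- c i) * a i = - \sum_i c i * a i.
Proof. rewrite -sumrN; apply: eq_bigr => i _; by rewrite mulNr. Qed.

Lemma Phi_pos X : hermitian X -> psd X -> 0 <= Phi a X.
Proof.
move=> hX pX.
have := @ha op0 0 (coef X) Lq0 (suppT _).
rewrite /val f0 add0r; apply; apply: psd_ext pX => p q.
by rewrite /comb /op0 rmorph0 mul0r !add0r decomp.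
Qed.

Lemma Phi_L L : Lq L -> hermitian L -> f L = Phi a L.
Proof.
move=> hL hh.
have h1 := @ha L 0 (fun i => - coef L i) hL (suppT _).
have h2 := @ha (sc (-1) L) 0 (coef L) (LqN hL) (suppT _).
rewrite /val sumNa -/(Phi a L) in h1; rewrite /val fN -/(Phi a L) in h2.
suff [e1 e2] : 0 <= f L - Phi a L /\ 0 <= - f L + Phi a L by lra.
split; [apply: h1 | apply: h2]; apply: psd_ext psd0 => p q;
  rewrite /comb /op0 rmorph0 mul0r addr0 ?sumNc decomp // /sc.
  by rewrite subrr.
by rewrite rmorphN rmorph1 mulN1r addNr.
Qed.

Lemma Phi_M : hermitian M -> Phi a M = 0.
Proof.
move=> hM.
have h1 := @ha op0 1 (fun i => - coef M i) Lq0 (suppT _).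
have h2 := @ha op0 (-1) (coef M) Lq0 (suppT _).
rewrite /val sumNa -/(Phi a M) f0 in h1; rewrite /val f0 -/(Phi a M) in h2.
suff [e1 e2] : 0 <= 0 - Phi a M /\ 0 <= 0 + Phi a M by lra.
split; [apply: h1 | apply: h2]; apply: psd_ext psd0 => p q;
  rewrite /comb /op0 add0r ?sumNc decomp //.
  by rewrite rmorph1 mul1r subrr.
by rewrite rmorphN rmorph1 mulN1r addNr.
Qed.

Lemma Y_psd : psd (Ymat a).
Proof.
split; first exact: herm_Y.
move=> v; change (0 <= qf v (Ymat a)).
rewrite qf_tp tp_Y; last by case: (proj_psd v).
rewrite ler0c; apply: Phi_pos; [by case: (proj_psd v) | exact: proj_psd].
Qed.

Lemma tpY_L L : Lq L -> hermitian L -> tp (Ymat a) L = (f L)%:C.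
Proof. by move=> hL hh; rewrite tp_Y // -Phi_L. Qed.

Lemma tpY_M : hermitian M -> tp (Ymat a) M = 0.
Proof. by move=> hM; rewrite tp_Y // Phi_M. Qed.

End Final.
End Krein.

Lemma tpC (A B : op) : tp A B = tp B A.
Proof.
rewrite /tp exchange_big; apply: eq_bigr => x _; apply: eq_bigr => y _; by rewrite mulrC.
Qed.

Lemma tp_lin (Z A B : op) (c1 c2 : C) :
  tp Z (fun x y : Bs => c1 * A x y + c2 * B x y) = c1 * tp Z A + c2 * tp Z B.
Proof.
rewrite /tp !mulr_sumr -big_split /=; apply: eq_bigr => x _.
rewrite !mulr_sumr -big_split /=; apply: eq_bigr => y _; ring.
Qed.

Lemma tp_ext (Z A B : op) : (forall x y, A x y = B x y) -> tp Z A = tp Z B.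
Proof. by move=> h; rewrite /tp; apply: eq_bigr => x _; apply: eq_bigr => y _; rewrite h. Qed.

Lemma local_add S (A B : op) : local_on S A -> local_on S B -> local_on S (fun x y : Bs => A x y + B x y).
Proof.
move=> [hA [rA eA]] [hB [rB eB]]; exists (fun x y => hA x y + hB x y); split.
  by move=> x x' y y' ex ey; rewrite (rA x x' y y') // (rB x x' y y').
by move=> x y; rewrite eA eB; case: ifP; rewrite ?addr0.
Qed.

Lemma local_scale S (c : C) (A : op) : local_on S A -> local_on S (fun x y : Bs => c * A x y).
Proof.
move=> [hA [rA eA]]; exists (fun x y => c * hA x y); split.
  by move=> x x' y y' ex ey; rewrite (rA x x' y y').
by move=> x y; rewrite eA; case: ifP; rewrite ?mulr0.
Qed.

Definition adj (A : op) : op := fun x y => (A y x)^*.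

Lemma local_adj S (A : op) : local_on S A -> local_on S (adj A).
Proof.
move=> [hA [rA eA]]; exists (fun x y => (hA y x)^*); split.
  by move=> x x' y y' ex ey; rewrite (rA y y' x x').
by move=> x y; rewrite /adj eA agree_sym; case: ifP; rewrite ?rmorph0.
Qed.

Lemma local_0 S : local_on S op0.
Proof. by exists op0; split => // x y; case: ifP. Qed.

Lemma local_I S : local_on S opI.
Proof.
exists (fun x y => (agree_on S x y)%:R); split.
  move=> x x' y y' ex ey.
  suff -> : agree_on S x y = agree_on S x' y' by [].
  apply/idP/idP => h.
    by apply: (agree_trans _ ey); apply: (agree_trans _ h); rewrite agree_sym.
  by apply: (agree_trans ex); apply: (agree_trans h); rewrite agree_sym.
move=> x y; rewrite /opI -(agree_all S); case: (agree_on (~: S) x y);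
  by rewrite ?andbT ?andbF.
Qed.

Section QL.
Variables (K : nat) (nb : 'I_K -> {set 'I_N}).

Lemma ql_add (A B : op) : quasi_local nb A -> quasi_local nb B ->
  quasi_local nb (fun x y : Bs => A x y + B x y).
Proof.
move=> [hA [hsA [lA eA]]] [hB [hsB [lB eB]]]; split; first exact: hermD.
exists (fun k x y => hsA k x y + hsB k x y); split; first by move=> k; apply: local_add.
by move=> x y; rewrite eA eB big_split.
Qed.

Lemma ql_sc r (A : op) : quasi_local nb A -> quasi_local nb (sc r A).
Proof.
move=> [hA [hsA [lA eA]]]; split; first exact: hermZ.
exists (fun k x y => r%:C * hsA k x y); split; first by move=> k; apply: local_scale.
by move=> x y; rewrite /sc eA mulr_sumr.
Qed.

Lemma ql_0 : quasi_local nb op0.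
Proof.
split; first by move=> x y; rewrite /op0 rmorph0.
exists (fun k => op0); split; first by move=> k; apply: local_0.
by move=> x y; rewrite big1.
Qed.

Lemma ql_local k (E : op) : local_on (nb k) E -> hermitian E -> quasi_local nb E.
Proof.
move=> lE hE; split => //.
exists (fun k' x y => if k' == k then E x y else 0); split.
  by move=> k'; case: eqP => [->|_]; [exact: lE | exact: local_0].
move=> x y; rewrite (bigD1 k) //= eqxx big1 ?addr0 // => k' /negbTE -> //.
Qed.

End QL.

Definition Tst S (x y : Bs) : op :=
  fun z w => (agree_on S z y && agree_on S w x && agree_on (~: S) z w)%:R.

Lemma agree_congr S (z z' y : Bs) : agree_on S z z' -> agree_on S z y = agree_on S z' y.
Proof.
move=> e; apply/idP/idP => h; first by apply: agree_trans h; rewrite agree_sym.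
exact: agree_trans h.
Qed.

Lemma local_Tst S x y : local_on S (Tst S x y).
Proof.
exists (fun z w => (agree_on S z y && agree_on S w x)%:R); split.
  by move=> z z' w w' ez ew; rewrite (agree_congr y ez) (agree_congr x ew).
by move=> z w; rewrite /Tst; case: (agree_on (~: S) z w); rewrite ?andbT ?andbF.
Qed.

Lemma tp_Tst S x y (Z : op) : tp Z (Tst S x y) = ptrace S Z x y.
Proof.
rewrite /ptrace big_mkcond /tp; apply: eq_bigr => p _; case: ifP => hp.
  rewrite -(sum_delta' (fun q => Z p q) (glue S y p)); apply: eq_bigr => q _.
  by rewrite /Tst hp andbT agree_glue.
by rewrite big1 // => q _; rewrite /Tst hp andbF /= mulr0.
Qed.

Definition E1 (E : op) : op := fun x y => E x y + adj E x y.
Definition E2 (E : op) : op := fun x y => iC * E x y + (- iC) * adj E x y.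

Lemma herm_E1 E : hermitian (E1 E).
Proof. by move=> x y; rewrite /E1 /adj rmorphD /= cK addrC. Qed.

Lemma herm_E2 E : hermitian (E2 E).
Proof.
move=> x y; rewrite /E2 /adj rmorphD !rmorphM /= cK.
have -> : (- iC)^* = iC by rewrite rmorphN /= conj_i opprK.
by rewrite conj_i addrC.
Qed.

Lemma E_decomp E x y : E x y = 2^-1 * E1 E x y + (2^-1 * - iC) * E2 E x y.
Proof.
rewrite /E1 /E2; move: (adj E x y) (E x y) => u e.
have h2 : (2 : C) != 0 by rewrite pnatr_eq0.
transitivity (2^-1 * ((1 - iC * iC) * e + (1 + iC * iC) * u)); last by move: (2^-1 : C) => h; ring.
by rewrite i2 subrr mul0r addr0 opprK mulrA mulVf // mul1r.
Qed.

Section QL2.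
Variables (K : nat) (nb : 'I_K -> {set 'I_N}).

Lemma local_ql_E1 k E : local_on (nb k) E -> quasi_local nb (E1 E).
Proof. by move=> lE; apply: (ql_local (k := k)) (herm_E1 E); apply: local_add => //; apply: local_adj. Qed.

Lemma local_ql_E2 k E : local_on (nb k) E -> quasi_local nb (E2 E).
Proof.
move=> lE; apply: (ql_local (k := k)) (herm_E2 E).
by apply: local_add; apply: local_scale => //; apply: local_adj.
Qed.

Lemma tp_local_eq (Z W : op) k E :
  (forall L, quasi_local nb L -> tp Z L = tp W L) -> local_on (nb k) E -> tp Z E = tp W E.
Proof.
move=> h lE.
rewrite !(tp_ext _ (E_decomp E)) [tp Z _]tp_lin [tp W _]tp_lin.
by rewrite (h _ (local_ql_E1 lE)) (h _ (local_ql_E2 lE)).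
Qed.

Lemma tp_I (Z : op) : tp Z opI = optr Z.
Proof.
rewrite /tp /optr; apply: eq_bigr => x _.
rewrite -(sum_delta' (fun y => Z x y) x); apply: eq_bigr => y _; by rewrite /opI eq_sym.
Qed.

Lemma uda_apply (psi : vec) (Y : op) (k0 : 'I_K) :
  normalized psi -> UDA nb (proj psi) -> psd Y ->
  (forall L, quasi_local nb L -> tp Y L = tp (proj psi) L) -> Y = proj psi.
Proof.
move=> hn hU pY h; apply: hU.
  split => //; rewrite -tp_I h; last by apply: (ql_local (k := k0)) herm_I; apply: local_I.
  rewrite tp_I /optr -hn; apply: eq_bigr => x _; by rewrite /proj mulrC.
move=> k; apply: functional_extensionality => x; apply: functional_extensionality => y.
rewrite -!tp_Tst; apply: (tp_local_eq h); exact: local_Tst.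
Qed.

End QL2.

Definition ip (u w : vec) : C := \sum_x (u x)^* * w x.
Definition bf (u : vec) (A : op) (w : vec) : C := \sum_x \sum_y (u x)^* * A x y * w y.

Lemma ip_ge0 u : 0 <= ip u u.
Proof. by apply: sumr_ge0 => x _; rewrite mulrC mul_conjC_ge0. Qed.

Lemma ip_eq0 u : ip u u = 0 -> forall x, u x = 0.
Proof.
move=> h x; have h' : forall i : Bs, true -> 0 <= (u i)^* * u i.
  by move=> i _; rewrite mulrC mul_conjC_ge0.
have := psumr_eq0P h' h (i := x) isT; move/eqP.
by rewrite mulf_eq0 conjC_eq0 orbb => /eqP.
Qed.

Lemma ip_conj u w : (ip u w)^* = ip w u.
Proof.
rewrite /ip rmorph_sum; apply: eq_bigr => x _; by rewrite rmorphM /= cK mulrC.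
Qed.

Lemma bf_conj u (A : op) w : hermitian A -> (bf u A w)^* = bf w A u.
Proof.
move=> hA; rewrite /bf rmorph_sum /=; under eq_bigr do rewrite rmorph_sum /=.
rewrite exchange_big; apply: eq_bigr => y _; apply: eq_bigr => x _.
by rewrite !cM -(hA x y) cK mulrC [u x * _]mulrC mulrA.
Qed.

Lemma qf_app v (A : op) : qf v A = \sum_x (v x)^* * opapp A v x.
Proof.
rewrite /qf /opapp; apply: eq_bigr => x _; rewrite mulr_sumr; apply: eq_bigr => y _.
by rewrite mulrA.
Qed.

Lemma sum2_comb (F G H : Bs -> Bs -> C) (a b : C) :
  \sum_x \sum_y (F x y + a * G x y + b * H x y)
  = \sum_x \sum_y F x y + a * \sum_x \sum_y G x y + b * \sum_x \sum_y H x y.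
Proof.
rewrite !mulr_sumr -!big_split /=; apply: eq_bigr => x _.
by rewrite !mulr_sumr -!big_split.
Qed.

Lemma sum1_comb (F G H J : Bs -> C) (a b c : C) :
  \sum_x (F x + a * G x + b * H x + c * J x)
  = \sum_x F x + a * \sum_x G x + b * \sum_x H x + c * \sum_x J x.
Proof. by rewrite !mulr_sumr -!big_split. Qed.

Lemma qf_expand (u w : vec) (A : op) (t : R) :
  qf (fun x => u x - t%:C * w x) A
  = qf u A - t%:C * (bf w A u + bf u A w) + (t * t)%:C * qf w A.
Proof.
have -> : bf w A u + bf u A w = \sum_x \sum_y ((w x)^* * A x y * u y + (u x)^* * A x y * w y).
  rewrite /bf -big_split; apply: eq_bigr => x _; by rewrite -big_split.
rewrite /qf -mulNr -sum2_comb; apply: eq_bigr => x _; apply: eq_bigr => y _.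
rewrite rmorphB rmorphM /= conjR rmorphM /=.
move: ((u x)^*) ((w x)^*) => a b; ring.
Qed.

Lemma kernel (M : op) (psi : vec) : psd M -> qf psi M = 0 -> forall x, opapp M psi x = 0.
Proof.
move=> [hM pM] h0.
set w := opapp M psi.
have hn : bf w M psi = ip w w.
  rewrite /bf /ip; apply: eq_bigr => x _; rewrite /w /opapp mulr_sumr; apply: eq_bigr => y _.
  by rewrite mulrA.
have n0 := ip_ge0 w.
have hn' : bf psi M w = ip w w.
  by rewrite -bf_conj // hn ip_conj.
have q0 : 0 <= qf w M := pM w.
have /complex_realP [nr enr] := ger0_real n0.
have /complex_realP [qr eqr] := ger0_real q0.
have nr0 : 0 <= nr by rewrite -ler0c -enr.
have qr0 : 0 <= qr by rewrite -ler0c -eqr.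
suff : nr = 0.
  move=> nr0'; apply: ip_eq0; by rewrite enr nr0'.
pose t := nr / (qr + 1).
have key : 0 <= qf (fun x => psi x - t%:C * w x) M := pM _.
rewrite qf_expand h0 hn hn' enr eqr in key.
have e : (0 - t%:C * (nr%:C + nr%:C) + (t * t)%:C * qr%:C) = (t * t * qr - t * (nr + nr))%:C.
  by rewrite !rmorphD !rmorphM rmorphN /= !rmorphM; ring.
rewrite e ler0c in key.
apply/eqP; rewrite eq_le nr0 andbT; apply: contra_leT key; rewrite -ltNge => npos.
have q1 : 0 < qr + 1 by lra.
have tpos : 0 < t by rewrite /t divr_gt0.
have ht : t * qr = nr - t.
  by rewrite /t; field; rewrite gt_eqF.
have -> : t * t * qr - t * (nr + nr) = - (t * nr + t * t).
  by rewrite -mulrA ht; ring.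
by rewrite oppr_lt0 addr_gt0 // mulr_gt0.
Qed.

Lemma qf_proj (v psi : vec) : qf v (proj psi) = (ip psi v)^* * ip psi v.
Proof.
rewrite ip_conj /qf /ip mulr_suml; apply: eq_bigr => x _.
rewrite mulr_sumr; apply: eq_bigr => y _; rewrite /proj; ring.
Qed.

Lemma cs_expand (psi v : vec) : normalized psi ->
  ip (fun x => v x - ip psi v * psi x) (fun x => v x - ip psi v * psi x)
  = ip v v - (ip psi v)^* * ip psi v.
Proof.
move=> hn; set z := ip psi v.
have e1 : ip v psi = z^* by rewrite /z ip_conj.
have e2 : ip psi psi = 1 by [].
transitivity (ip v v + (- z) * ip v psi + (- z^*) * ip psi v + (z^* * z) * ip psi psi).
  rewrite /ip -sum1_comb; apply: eq_bigr => x _.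
  rewrite cD cN cM; ring.
rewrite e1 e2 -/z; ring.
Qed.

Lemma cs (psi v : vec) : normalized psi -> qf v (proj psi) <= ip v v.
Proof.
move=> hn; rewrite qf_proj -subr_ge0 -cs_expand //; exact: ip_ge0.
Qed.

Lemma opapp_proj (psi v : vec) x : opapp (proj psi) v x = psi x * ip psi v.
Proof.
rewrite /opapp /ip mulr_sumr; apply: eq_bigr => y _; rewrite /proj; ring.
Qed.

Lemma opapp_add (A B : op) v x : opapp (opadd A B) v x = opapp A v x + opapp B v x.
Proof. by rewrite /opapp /opadd -big_split; apply: eq_bigr => y _; rewrite mulrDl. Qed.

Lemma ground (H0 : op) (psi : vec) : normalized psi -> hermitian H0 ->
  psd (opadd H0 (proj psi)) -> qf psi (opadd H0 (proj psi)) = 0 ->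
  unique_ground_state H0 psi.
Proof.
move=> hn hH pM q0.
have hk := kernel pM q0.
have hH0 : forall x, opapp H0 psi x = -1 * psi x.
  move=> x; have := hk x; rewrite opapp_add opapp_proj.
  have -> : ip psi psi = 1 by [].
  by rewrite mulr1 mulN1r => /eqP; rewrite addr_eq0 => /eqP.
have qfM : forall v, qf v (opadd H0 (proj psi)) = qf v H0 + qf v (proj psi).
  by move=> v; rewrite -qfD.
have eig_qf : forall (v : vec) mu, opapp H0 v = (fun x => mu * v x) -> qf v H0 = mu * ip v v.
  move=> v mu hv; rewrite qf_app hv /ip mulr_sumr; apply: eq_bigr => x _; ring.
have psd_v : forall v, 0 <= qf v (opadd H0 (proj psi)) by move=> v; case: pM => _; apply.
exists (-1); split; [|split].
- exists psi; split; last by apply: functional_extensionality => x; rewrite hH0.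
  case: (pickP (fun x => psi x != 0)) => [x hx | h]; first by exists x.
  have : ip psi psi = 0.
    by rewrite /ip big1 // => x _; move/negbFE/eqP: (h x) ->; rewrite mulr0.
  have hn' : ip psi psi = 1 := hn.
  by rewrite hn' => /eqP; rewrite oner_eq0.
- move=> mu [v [[x vx] hv]].
  have nv0 : 0 < ip v v.
    rewrite lt_def ip_ge0 andbT; apply/eqP => h0.
    by move/eqP: vx; apply; rewrite (ip_eq0 h0).
  have h1 := psd_v v; rewrite qfM (eig_qf v mu hv) in h1.
  have h2 := cs v hn.
  have : 0 <= (mu + 1) * ip v v.
    have -> : (mu + 1) * ip v v = (mu * ip v v + qf v (proj psi)) + (ip v v - qf v (proj psi)) by ring.
    by rewrite addr_ge0 // subr_ge0.
  by rewrite pmulr_lge0 // => h; rewrite -subr_ge0 opprK.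
- move=> v; split.
  + move=> hv; exists (ip psi v); apply: functional_extensionality => x.
    have h1 := psd_v v; rewrite qfM (eig_qf v (-1) hv) mulN1r in h1.
    have h2 := cs v hn.
    have e : qf v (proj psi) = ip v v.
      by apply/eqP; rewrite eq_le h2 /= -subr_ge0 addrC.
    have := @ip_eq0 (fun x => v x - ip psi v * psi x).
    rewrite cs_expand // -qf_proj e subrr => /(_ erefl x) /eqP.
    by rewrite subr_eq0 => /eqP.
  + move=> [c ->]; apply: functional_extensionality => x.
    rewrite /opapp (eq_bigr (fun y => c * (H0 x y * psi y))); last by move=> y _; ring.
    by rewrite -mulr_sumr -/(opapp H0 psi x) hH0; ring.
Qed.
End Basic.

Lemma K0_case (R : realType) (N : nat) (d : 'I_N -> nat) (nb : 'I_0 -> {set 'I_N})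
  (psi : vec R d) (H0 : op R d) :
  nontrivial nb -> normalized psi -> quasi_local nb H0 -> unique_ground_state H0 psi.
Proof.
move=> [hcov _] hn [_ [hs [_ eH]]].
have H00 : forall x y, H0 x y = 0 by move=> x y; rewrite eH big_ord0.
have bas : forall x y : basis d, x = y.
  move=> x y; apply/ffunP => a; by case: (hcov a) => -[].
have app0 : forall v : vec R d, opapp H0 v = (fun x => 0 * v x).
  move=> v; apply: functional_extensionality => x; rewrite mul0r /opapp big1 // => y _.
  by rewrite H00 mul0r.
have [x0 px0] : exists x, psi x != 0.
  case: (pickP (fun x => psi x != 0)) => [x hx | h]; first by exists x.
  have : \sum_x (psi x)^* * psi x = 0.
    by rewrite big1 // => x _; move/negbFE/eqP: (h x) ->; rewrite mulr0.
  by rewrite hn => /eqP; rewrite oner_eq0.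
exists 0; split; [|split].
- by exists psi; split; [exists x0 | apply: app0].
- move=> mu [v [[x vx] hv]].
  have := congr1 (fun g => g x) hv; rewrite app0 mul0r => /esym/eqP.
  by rewrite mulf_eq0 (negbTE vx) orbF => /eqP ->.
- move=> v; split; last by move=> _; apply: app0.
  move=> _; exists (v x0 / psi x0); apply: functional_extensionality => x.
  by rewrite (bas x x0) mulfVK.
Qed.

Unset Implicit Arguments.

Theorem theoremV2 (R : realType) (N : nat) (d : 'I_N -> nat)
  (K : nat) (nb : 'I_K -> {set 'I_N}) (psi : vec R d) :
  neighborhood_structure nb -> nontrivial nb ->
  normalized psi ->
  UDA nb (proj psi) ->
  (exists H0 : op R d, feasible nb (proj psi) H0 /\
     forall H : op R d, feasible nb (proj psi) H ->
       - optr (opmul H (proj psi)) <= - optr (opmul H0 (proj psi))) ->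
  exists H : op R d, quasi_local nb H /\ unique_ground_state H psi.
Proof.
move=> hnb hnt hn hU [H0 [[hH0 [pM qlH0]] hopt]].
exists H0; split => //.
case: K nb hnb hnt hU hopt qlH0 => [|K] nb hnb hnt hU hopt qlH0.
  exact: K0_case hnt hn qlH0.
pose k0 : 'I_K.+1 := ord0.
pose M := opadd H0 (proj psi).
pose f := fun L : op R d => complex.Re (qf psi L).
have LqD : forall L L' : op R d, quasi_local nb L -> quasi_local nb L' ->
    quasi_local nb (fun p q => L p q + L' p q) by move=> L L'; apply: ql_add.
have LqZ : forall r (L : op R d), quasi_local nb L -> quasi_local nb (sc r L) by move=> r L; apply: ql_sc.
have LqI : quasi_local nb (opI R (d := d)).
  by apply: (ql_local (k := k0)); [apply: local_I | apply: herm_I].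
have fD : forall L L' : op R d, f (fun p q => L p q + L' p q) = f L + f L'.
  by move=> L L'; rewrite /f qfD ReD.
have fZ : forall r (L : op R d), f (sc r L) = r * f L.
  by move=> r L; rewrite /f /sc qfZ ReZ.
have eopt : forall A, optr (opmul A (proj psi)) = qf psi A by move=> A; rewrite qf_tp.
have base : forall L s, quasi_local nb L -> psd (fun p q => L p q + s%:C%C * M p q) -> 0 <= f L.
  move=> L s hL hpsd.
  pose t := (`|s| + 1)^-1.
  have t0 : 0 < t by rewrite /t invr_gt0 ltr_wpDl.
  have ts : t * s <= 1.
    rewrite -(mulVf (x := `|s| + 1)); last by rewrite gt_eqF // ltr_wpDl.
    rewrite ler_wpM2l ?ltW //; have := ler_norm s; lra.
  have ts0 : 0 <= 1 - t * s by rewrite subr_ge0.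
  pose H := fun x y => H0 x y + (t%:C)%C * L x y.
  have feas : feasible nb (proj psi) H.
    split; first by apply: hermD => //; apply: (hermZ t); case: hL.
    split; last by apply: ql_add => //; apply: ql_sc.
    apply: psd_ext (psdD (psdZ (ltW t0) hpsd) (psdZ ts0 pM)) => p q.
    rewrite /sc /H /M /opadd rmorphB rmorph1 rmorphM /=; ring.
  have := hopt H feas; rewrite !eopt /H qfD qfZ lerN2 lerDl pmulr_rge0; last by rewrite ltcR.
  by rewrite lecE => /andP [_].
have [a ha] := ext_all LqD LqZ LqI fD fZ base.
have f0 : f (op0 R (d := d)) = 0.
  rewrite /f /qf big1 // => x _; rewrite big1 // => y _; by rewrite /op0 mulr0 mul0r.
have Lq0 := ql_0 R d nb.
have LqN : forall L : op R d, quasi_local nb L -> quasi_local nb (sc (-1) L) by move=> L; apply: ql_sc.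
have fN : forall L : op R d, f (sc (-1) L) = - f L by move=> L; rewrite fZ mulN1r.
have hY : Ymat a = proj psi.
  apply: (uda_apply k0 hn hU (Y_psd ha f0 Lq0)) => L hL.
  rewrite (tpY_L ha LqN fN hL); last by case: hL.
  rewrite /f RRe_real; last by apply: herm_qf_real; case: hL.
  by rewrite qf_tp tpC.
have hM : hermitian M by apply: hermD => //; case: (proj_psd psi).
have := tpY_M ha f0 Lq0 hM; rewrite hY tpC -qf_tp => q0.
exact: ground hn hH0 pM q0.
Qed.
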